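(* Consider the discrete-time system $x(t+1)=f(x(t),u(t))$ with $f\in\mathbb{R}[x,u]^n$, $x\in\mathbb{R}^n$, $u\in\mathbb{R}^m$, and the nonempty constraint set $\mathbb{P}=\{(x,u)\in\mathbb{R}^n\times\mathbb{R}^m: p_i(x,u)\leq 0,\ i=1,\dots,c\}$ with $p_i\in\mathbb{R}[x,u]$. Let $z\in\mathbb{R}[x,u]^\ell$ be a known vector of polynomials such that $f(x,u)=Az(x,u)=Z(x,u)a$ for some (unknown) $A\in\mathbb{R}^{n\times\ell}$, where $Z(x,u)=I_n\otimes z(x,u)^T$ and $a=\mathrm{vec}(A^T)\in\mathbb{R}^{n\ell}$. Let data $(\tilde{x}_i^+,\tilde{x}_i,\tilde{u}_i)$, $i=1,\dots,D$, satisfy $\tilde{x}_i^+=f(\tilde{x}_i,\tilde{u}_i)+\tilde{d}_i$ with $\tilde{d}_i\in\mathcal{D}_i^{\mathrm{SB}}=\{d\in\mathbb{R}^n:\delta_i(d)\leq 0\}$, where $\delta_i\in\mathbb{R}[d]$ and each $\mathcal{D}_i^{\mathrm{SB}}$ is bounded. Let $s\in\mathbb{R}[x,u]$ be a given supply rate. Suppose there exist $\lambda\in\mathrm{SOS}[x]$, $s_i\in\mathrm{SOS}[x,u,a]$ for $i=1,\dots,c$, and $t_i\in\mathrm{SOS}[x,u,a]$ for $i=1,\dots,D$ such that $\psi\in\mathrm{SOS}[x,u,a]$, where \[\psi(x,u,a)=s(x,u)-\lambda(Z(x,u)a)+\lambda(x)+\sum_{i=1}^{D}\delta_i(\tilde{x}_i^+-Z(\tilde{x}_i,\tilde{u}_i)a)\,t_i(x,u,a)+\sum_{i=1}^{c}p_i(x,u)\,s_i(x,u,a)\]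 (viewed as a polynomial in the variables $x,u,a$). Then the system is dissipative on $\mathbb{P}$ with respect to the supply rate $s$.
   Context: A polynomial matrix $P\in\mathbb{R}[x]^{r\times r}$ of even degree is an SOS matrix if $P=Q^TQ$ for some polynomial matrix $Q\in\mathbb{R}[x]^{s\times r}$; $\mathrm{SOS}[x]^{r\times r}$ denotes the set of such matrices, and for $r=1$ one writes $\mathrm{SOS}[x]$ for SOS polynomials. $\mathrm{vec}$ stacks the columns of a matrix; $\otimes$ is the Kronecker product. Dissipativity: the system $x(t+1)=f(x,u)$ is dissipative on $\mathbb{P}$ with respect to a supply rate $s:\mathbb{P}\to\mathbb{R}$ if there exists a continuous storage function $\lambda:\mathbb{X}\to\mathbb{R}_{\geq 0}$ with $\lambda(f(x,u))-\lambda(x)\leq s(x,u)$ for all $(x,u)\in\mathbb{P}$, where $\mathbb{X}$ is the projection of $\mathbb{P}$ onto $\mathbb{R}^n$. *)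

(* Defs.v *)
From HB Require Import structures.
From mathcomp Require Import all_boot all_order all_algebra.
From mathcomp Require Import mpoly.
From mathcomp Require Import reals.
Set Implicit Arguments. Unset Strict Implicit. Unset Printing Implicit Defensive.
Import Order.TTheory GRing.Theory Num.Theory.
Local Open Scope ring_scope.

Definition sos (R : comRingType) (k : nat) (p : {mpoly R[k]}) : Prop :=
  exists qs : seq {mpoly R[k]}, p = \sum_(q <- qs) q ^+ 2.

(* Concatenation of the state x in R^n and input u in R^m into a point of
   R^(n+m), the variables of R[x,u] being ordered (x_1..x_n,u_1..u_m). *)
Definition xu (R : Type) (n m : nat) (x : 'I_n -> R) (u : 'I_m -> R)
  : 'I_(n + m) -> R :=
  fun k => match split k with inl i => x i | inr j => u j end.

(* Variables of R[x,u,a], ordered (x, u, a) with a in R^(n*l):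
   'I_(n + m + n * l). *)
Section Vars.
Variables (R : comRingType) (n m l : nat).
Local Notation N := (n + m + n * l)%N.
Definition Xvar (i : 'I_n) : {mpoly R[N]} := 'X_(lshift (n * l) (lshift m i)).
Definition Uvar (j : 'I_m) : {mpoly R[N]} := 'X_(lshift (n * l) (rshift n j)).
(* a = vec(A^T) : its entry A i j sits at index mxvec_index i j
   (mxvec stacks the rows of A, i.e. the columns of A^T). *)
Definition Avar (i : 'I_n) (j : 'I_l) : {mpoly R[N]} :=
  'X_(rshift (n + m) (mxvec_index i j)).

Definition lift_xu (p : {mpoly R[n + m]}) : {mpoly R[N]} :=
  p \mPo [tuple match split k with inl i => Xvar i | inr j => Uvar j end
          | k < (n + m)%N].
Definition lift_x (p : {mpoly R[n]}) : {mpoly R[N]} :=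
  p \mPo [tuple Xvar i | i < n].

(* (Z(x,u) a) as a vector of polynomials in (x,u,a), with
   Z(x,u) = I_n (x) z(x,u)^T :  (Z a)_i = sum_j z_j(x,u) a_{(i,j)}. *)
Definition Za (z : 'I_l -> {mpoly R[n + m]}) : n.-tuple {mpoly R[N]} :=
  [tuple \sum_(j < l) lift_xu (z j) * Avar i j | i < n].

Definition data_res (z : 'I_l -> {mpoly R[n + m]}) (xp xt : 'I_n -> R)
  (ut : 'I_m -> R) : n.-tuple {mpoly R[N]} :=
  [tuple (xp i)%:MP - \sum_(j < l) ((z j).@[xu xt ut])%:MP * Avar i j | i < n].
End Vars.

Definition dissipative (R : realType) (n m : nat)
  (f : ('I_n -> R) -> ('I_m -> R) -> ('I_n -> R))
  (P : ('I_n -> R) -> ('I_m -> R) -> Prop)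
  (s : ('I_n -> R) -> ('I_m -> R) -> R) : Prop :=
  let X := fun x => exists u, P x u in
  exists lam : ('I_n -> R) -> R,
    [/\ (forall x, X x -> forall e : R, 0 < e -> exists2 d : R, 0 < d &
           forall y, X y -> (forall k, `|y k - x k| < d) -> `|lam y - lam x| < e),
        (forall x, X x -> 0 <= lam x) &
        (forall x u, P x u -> lam (f x u) - lam x <= s x u)].

(* Main.v *)
Require Import Defs.
From HB Require Import structures.
From mathcomp Require Import all_boot all_order all_algebra.
From mathcomp Require Import mpoly.
From mathcomp Require Import reals.
From mathcomp Require Import ring lra.
Import Order.TTheory GRing.Theory Num.Theory.
Local Open Scope ring_scope.

Section Aux.
Variable R : realType.

Definition contp (k : nat) (F : ('I_k -> R) -> R) :=
  forall x (e : R), 0 < e -> exists2 d : R, 0 < d &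
    forall y, (forall i, `|y i - x i| < d) -> `|F y - F x| < e.

Arguments contp {k}.
Lemma contC k c : contp (fun _ : 'I_k -> R => c).
Proof. by move=> x e e0; exists 1 => // y _; rewrite subrr normr0. Qed.

Lemma contX k i : contp (fun x : 'I_k -> R => x i).
Proof. by move=> x e e0; exists e. Qed.

Lemma contD k F G : contp F -> contp G -> contp (fun x : 'I_k -> R => F x + G x).
Proof.
move=> cF cG x e e0.
have e2 : 0 < e / 2 by rewrite divr_gt0.
have [d1 d10 H1] := cF x _ e2; have [d2 d20 H2] := cG x _ e2.
exists (Num.min d1 d2); first by rewrite lt_min d10 d20.
move=> y Hy.
have Hy1 : forall i, `|y i - x i| < d1 by move=> i; have := Hy i; rewrite lt_min => /andP[].
have Hy2 : forall i, `|y i - x i| < d2 by move=> i; have := Hy i; rewrite lt_min => /andP[].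
have := H1 _ Hy1; have := H2 _ Hy2.
have -> : F y + G y - (F x + G x) = (F y - F x) + (G y - G x) by rewrite addrACA opprD.
move=> a b; apply: (le_lt_trans (ler_normD _ _)); lra.
Qed.

Lemma contM k F G : contp F -> contp G -> contp (fun x : 'I_k -> R => F x * G x).
Proof.
move=> cF cG x e e0.
set a := `|F x|; set b := `|G x|.
have a0 : 0 <= a by rewrite normr_ge0.
have b0 : 0 <= b by rewrite normr_ge0.
set e1 := Num.min 1 (e / (2 * (b + 1))).
set e2 := e / (2 * (a + 1)).
have e10 : 0 < e1 by rewrite lt_min ltr01 /= divr_gt0 // mulr_gt0 //; lra.
have e20 : 0 < e2 by rewrite divr_gt0 // mulr_gt0 //; lra.
have [d1 d10 H1] := cF x _ e10; have [d2 d20 H2] := cG x _ e20.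
exists (Num.min d1 d2); first by rewrite lt_min d10 d20.
move=> y Hy.
have Hy1 : forall i, `|y i - x i| < d1 by move=> i; have := Hy i; rewrite lt_min => /andP[].
have Hy2 : forall i, `|y i - x i| < d2 by move=> i; have := Hy i; rewrite lt_min => /andP[].
have hf := H1 _ Hy1; have hg := H2 _ Hy2.
have -> : F y * G y - F x * G x = F y * (G y - G x) + (F y - F x) * G x by ring.
apply: (le_lt_trans (ler_normD _ _)); rewrite !normrM.
have hfy : `|F y| <= a + 1.
  have : `|F y| <= `|F y - F x| + a.
    by rewrite -[X in `|X|](subrK (F x)); exact: ler_normD.
  have : e1 <= 1 by rewrite ge_min lexx.
  lra.
have he1 : e1 <= e / (2 * (b + 1)) by rewrite ge_min lexx orbT.
have t1 : `|F y| * `|G y - G x| <= (a + 1) * e2.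
  apply: ler_pM; rewrite ?normr_ge0 //; exact: ltW.
have t2 : `|F y - F x| * b <= e / (2 * (b + 1)) * (b + 1).
  apply: ler_pM; rewrite ?normr_ge0 //; first exact: (le_trans (ltW hf)).
  lra.
have E1 : (a + 1) * e2 = e / 2 by rewrite /e2; field; lra.
have E2 : e / (2 * (b + 1)) * (b + 1) = e / 2 by field; lra.
have s1 : `|F y| * `|G y - G x| <= (a + 1) * `|G y - G x|.
  by apply: ler_wpM2r; rewrite ?normr_ge0.
have s2 : (a + 1) * `|G y - G x| < (a + 1) * e2.
  by rewrite ltr_pM2l //; lra.
have u1 : `|F y| * `|G y - G x| < e / 2 by rewrite -E1; exact: le_lt_trans s1 s2.
have u2 : `|F y - F x| * b <= e / 2 by rewrite -E2.
move: u1 u2; rewrite /b; lra.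
Qed.

Lemma contE k (F G : ('I_k -> R) -> R) : F =1 G -> contp F -> contp G.
Proof. by move=> FG cF x e e0; have [d d0 H] := cF x e e0; exists d => // y /H; rewrite !FG. Qed.
Arguments contE {k F G}.

Lemma contX_exp k F (j : nat) : contp F -> contp (fun x : 'I_k -> R => F x ^+ j).
Proof.
move=> cF; elim: j => [|j IH].
  by apply: (@contC k 1) .
apply: (contE (F := fun x => F x * F x ^+ j)); first by move=> x; rewrite exprS.
exact: contM.
Qed.

Lemma contSum k (I : Type) (r : seq I) (F : I -> ('I_k -> R) -> R) :
  (forall i, contp (F i)) -> contp (fun x => \sum_(i <- r) F i x).
Proof.
move=> cF; elim: r => [|i r IH].
  by apply: (contE (F := fun x => 0)); [move=> x; rewrite big_nil|exact: contC].
apply: (contE (F := fun x => F i x + \sum_(i <- r) F i x)); first by move=> x; rewrite big_cons.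
exact: contD.
Qed.

Lemma contProd k (I : Type) (r : seq I) (F : I -> ('I_k -> R) -> R) :
  (forall i, contp (F i)) -> contp (fun x => \prod_(i <- r) F i x).
Proof.
move=> cF; elim: r => [|i r IH].
  by apply: (contE (F := fun x => 1)); [move=> x; rewrite big_nil|exact: contC].
apply: (contE (F := fun x => F i x * \prod_(i <- r) F i x)); first by move=> x; rewrite big_cons.
exact: contM.
Qed.

Lemma contP k (p : {mpoly R[k]}) : contp (fun x => p.@[x]).
Proof.
apply: (contE (F := fun x => \sum_(mm <- msupp p) p@_mm * \prod_i x i ^+ mm i)).
  by move=> x; rewrite mevalE.
apply: contSum => mm; apply: contM; first exact: contC.
apply: contProd => i; apply: contX_exp; exact: contX.
Qed.

Lemma sos_ge0 k (p : {mpoly R[k]}) v : sos p -> 0 <= p.@[v].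
Proof.
move=> [qs ->]; rewrite rmorph_sum /=; apply: sumr_ge0 => q _.
by rewrite rmorphXn /= sqr_ge0.
Qed.
End Aux.

Lemma split_l (a b : nat) (i : 'I_a) : split (lshift b i) = inl i.
Proof. by rewrite -[lshift b i]/(unsplit (inl i)) unsplitK. Qed.
Lemma split_r (a b : nat) (i : 'I_b) : split (rshift a i) = inr i.
Proof. by rewrite -[rshift a i]/(unsplit (inr i)) unsplitK. Qed.

Theorem theorem1 (R : realType) (n m l c D : nat)
  (f : 'I_n -> {mpoly R[n + m]})
  (p : 'I_c -> {mpoly R[n + m]})
  (z : 'I_l -> {mpoly R[n + m]})
  (A : 'M[R]_(n, l))
  (xp xt : 'I_D -> 'I_n -> R) (ut : 'I_D -> 'I_m -> R) (dt : 'I_D -> 'I_n -> R)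
  (delta : 'I_D -> {mpoly R[n]})
  (s : {mpoly R[n + m]})
  (lam : {mpoly R[n]})
  (si : 'I_c -> {mpoly R[n + m + n * l]})
  (ti : 'I_D -> {mpoly R[n + m + n * l]}) :
  (* P is nonempty *)
  (exists (x : 'I_n -> R) (u : 'I_m -> R), forall i, (p i).@[xu x u] <= 0) ->
  (* f = A z *)
  (forall i, f i = \sum_(j < l) A i j *: z j) ->
  (* data *)
  (forall i k, xp i k = (f k).@[xu (xt i) (ut i)] + dt i k) ->
  (forall i, (delta i).@[dt i] <= 0) ->
  (* each D_i^SB is bounded *)
  (forall i, exists M : R, forall d : 'I_n -> R,
      (delta i).@[d] <= 0 -> forall k, `|d k| <= M) ->
  (* SOS multipliers *)
  sos lam -> (forall i, sos (si i)) -> (forall i, sos (ti i)) ->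
  sos (@lift_xu R n m l s - (lam \mPo @Za R n m l z) + @lift_x R n m l lam
       + \sum_(i < D) (delta i \mPo @data_res R n m l z (xp i) (xt i) (ut i)) * ti i
       + \sum_(i < c) @lift_xu R n m l (p i) * si i) ->
  dissipative (fun x u k => (f k).@[xu x u])
              (fun x u => forall i, (p i).@[xu x u] <= 0)
              (fun x u => s.@[xu x u]).
Proof.
move=> _ hf hxp hd _ hlam hsi hti hpsi.
exists (fun x => lam.@[x]); split.
- move=> x _ e e0; have [d d0 H] := @contP R n lam x e e0.
  by exists d => // y _ /H.
- by move=> x _; exact: sos_ge0.
move=> x u hp.
pose v : 'I_(n + m + n * l) -> R := fun k =>
  match split k with inl k' => xu x u k' | inr j => mxvec A 0 j end.
have vX i : (Xvar R m l i).@[v] = x i.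
  by rewrite /Xvar mevalXU /v split_l /xu split_l.
have vU j : (Uvar R n l j).@[v] = u j.
  by rewrite /Uvar mevalXU /v split_l /xu split_r.
have vA i j : (Avar R m i j).@[v] = A i j.
  by rewrite /Avar mevalXU /v split_r mxvecE.
have vxu q : (lift_xu l q).@[v] = q.@[xu x u].
  rewrite /lift_xu comp_mpoly_meval; apply: meval_eq => k.
  rewrite tnth_mktuple; rewrite /xu; case: (split k) => [i|j].
  - exact: vX.
  - exact: vU.
have vx q : (lift_x m l q).@[v] = q.@[x].
  rewrite /lift_x comp_mpoly_meval; apply: meval_eq => k.
  by rewrite tnth_mktuple vX.
have vZ : (lam \mPo Za z).@[v] = lam.@[fun k => (f k).@[xu x u]].
  rewrite comp_mpoly_meval; apply: meval_eq => k.
  rewrite tnth_mktuple rmorph_sum hf rmorph_sum /=; apply: eq_bigr => j _.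
  by rewrite mevalM vxu vA mevalZ mulrC.
have vR i : (delta i \mPo data_res z (xp i) (xt i) (ut i)).@[v] = (delta i).@[dt i].
  rewrite comp_mpoly_meval; apply: meval_eq => k.
  rewrite tnth_mktuple mevalB mevalC rmorph_sum hxp hf rmorph_sum /=.
  rewrite addrAC [X in X + _ = _](_ : _ = 0) ?add0r //; apply/eqP; rewrite subr_eq0; apply/eqP.
  by apply: eq_bigr => j _; rewrite mevalZ mevalM mevalC vA mulrC.
have S1 : \sum_(i < D) ((delta i \mPo data_res z (xp i) (xt i) (ut i)) * ti i).@[v] <= 0.
  apply: sumr_le0 => i _; rewrite mevalM vR; apply: mulr_le0_ge0 => //.
  exact: sos_ge0.
have S2 : \sum_(i < c) (lift_xu l (p i) * si i).@[v] <= 0.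
  apply: sumr_le0 => i _; rewrite mevalM vxu; apply: mulr_le0_ge0 => //.
  exact: sos_ge0.
have := @sos_ge0 R _ _ v hpsi.
rewrite !mevalD ?mevalB ?mevalN vxu vZ vx !rmorph_sum /=.
move: S1 S2.
set A1 := \sum_(i < D) _; set A2 := \sum_(i < c) _.
set L1 := lam.@[_]; set L2 := lam.@[x]; set S := s.@[_].
clearbody A1 A2 L1 L2 S.
move=> *; lra.
Qed.
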